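(* For every integer $n\ge1$ and every $f:\{0,1\}^n\times\{0,1\}^n\to\{0,1\}$, $$\log_2\chi^{\mathrm{geom}}(f)\;\le\; C^{\mathrm{comp}}(f)\;\le\; 2\lceil\log_2\chi^{\mathrm{geom}}(f)\rceil .$$ In particular $C^{\mathrm{comp}}(f)=\Theta(\log\chi^{\mathrm{geom}}(f))$ with absolute implied constants.
   Context: Order $\{0,1\}^n$ lexicographically (equivalently, by the integer with that binary representation). A geometric rectangle is a subset of $\{0,1\}^n\times\{0,1\}^n$ of the form $[a_1,a_2]\times[b_1,b_2]$, where $[a_1,a_2]=\{a: a_1\le a\le a_2\}$ is an interval in this order. It is $f$-monochromatic if $f$ is constant on it. $\chi^{\mathrm{geom}}(f)$ is the minimum number of nonempty $f$-monochromatic geometric rectangles in a partition of $\{0,1\}^n\times\{0,1\}^n$. For $x\in\{0,1\}^n$, $\theta_x(y)=1$ iff $y\ge x$. A comparison communication protocol is a rooted binary tree each of whose internal vertices $v$ is assigned to either Alice or Bob and labeled by a function $g_v:\{0,1\}^n\to\{0,1\}$ which is either some $\theta_{x_v}$ or the constant $0$ function, with outgoing edges labeled $0$ and $1$; leaves are labeled by outputs in $\{0,1\}$. On input $(a,b)$ one starts at the root and at each internal vertex $v$ follows the edge labeled $g_v(a)$ if $v$ is Alice's and $g_v(b)$ if $v$ is Bob's. The protocol computes $f$ if the leaf reached on every input is labeled $f(a,b)$. Its cost is its depth; $C^{\mathrm{comp}}(f)$ is the minimum cost of a comparison communication protocol computing $f$. *)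

(* Defs.v *)
From Stdlib Require Import Reals.
From mathcomp Require Import all_boot.

Set Implicit Arguments.
Unset Strict Implicit.
Unset Printing Implicit Defensive.

(* Inputs: {0,1}^n as n-tuples of booleans (first component = most significant). *)
Definition bits (n : nat) := n.-tuple bool.

Fixpoint lexle (s t : seq bool) : bool :=
  match s, t with
  | x :: s', y :: t' => (~~ x && y) || ((x == y) && lexle s' t')
  | _, _ => true
  end.

Definition ble n (a b : bits n) : bool := lexle (tval a) (tval b).

Definition geom_rect n (a1 a2 b1 b2 : bits n) : {set bits n * bits n} :=
  [set p | [&& ble a1 p.1, ble p.1 a2, ble b1 p.2 & ble p.2 b2]].

Definition is_geom_rect n (R : {set bits n * bits n}) : Prop :=
  exists a1 a2 b1 b2, R = geom_rect a1 a2 b1 b2.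

Definition monochromatic n (f : bits n -> bits n -> bool)
  (R : {set bits n * bits n}) : Prop :=
  exists c : bool, forall p, p \in R -> f p.1 p.2 = c.

(* A partition of {0,1}^n x {0,1}^n into nonempty f-monochromatic geometric
   rectangles (mathcomp's [partition] excludes the empty block). *)
Definition geom_mono_partition n (f : bits n -> bits n -> bool)
  (P : {set {set bits n * bits n}}) : Prop :=
  partition P [set: bits n * bits n] /\
  forall R, R \in P -> is_geom_rect R /\ monochromatic f R.

Definition is_chi_geom n (f : bits n -> bits n -> bool) (k : nat) : Prop :=
  (exists P, geom_mono_partition f P /\ #|P| = k) /\
  (forall P, geom_mono_partition f P -> k <= #|P|).

Inductive player := Alice | Bob.

Inductive query (n : nat) := QTheta of bits n | QZero.

Definition qeval n (q : query n) (y : bits n) : bool :=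
  match q with
  | QTheta x => ble x y
  | QZero => false
  end.

Inductive protocol (n : nat) :=
  | PLeaf of bool
  | PNode of player & query n & protocol n & protocol n.
  (* PNode p g t0 t1 : t0 is the child along edge 0, t1 along edge 1 *)

Fixpoint run n (t : protocol n) (a b : bits n) : bool :=
  match t with
  | PLeaf o => o
  | PNode p q t0 t1 =>
      let x := match p with Alice => a | Bob => b end in
      if qeval q x then run t1 a b else run t0 a b
  end.

Fixpoint depth n (t : protocol n) : nat :=
  match t with
  | PLeaf _ => 0
  | PNode _ _ t0 t1 => (maxn (depth t0) (depth t1)).+1
  end.

Definition computes n (t : protocol n) (f : bits n -> bits n -> bool) : Prop :=
  forall a b, run t a b = f a b.

Definition is_C_comp n (f : bits n -> bits n -> bool) (c : nat) : Prop :=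
  (exists t, computes t f /\ depth t = c) /\
  (forall t, computes t f -> c <= depth t).

Definition log2R (x : R) : R := Rdiv (ln x) (ln 2).

(* Main.v *)
Require Import Defs.
From Stdlib Require Import Reals Classical Lra.
From mathcomp Require Import all_boot zify.
Set Implicit Arguments.
Unset Strict Implicit.
Unset Printing Implicit Defensive.

Fixpoint val2 (s : seq bool) : nat :=
  if s is x :: s' then x * 2 ^ size s' + val2 s' else 0.

Lemma val2_lt s : val2 s < 2 ^ size s.
Proof. elim: s => [|x s IH] //=; rewrite expnS; case: x => /=; lia. Qed.

Lemma lexle_val2 s t : size s = size t -> lexle s t = (val2 s <= val2 t).
Proof.
elim: s t => [|x s IH] [|y t] //= [] Hst.
have := val2_lt s; have := val2_lt t; rewrite -Hst (IH _ Hst).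
case: x; case: y => /= H1 H2; lia.
Qed.

Lemma val2_inj s t : size s = size t -> val2 s = val2 t -> s = t.
Proof.
elim: s t => [|x s IH] [|y t] //= [] Hst.
have := val2_lt s; have := val2_lt t; rewrite -Hst.
case: x; case: y => /= H1 H2 E; try lia; by rewrite (IH t) //; lia.
Qed.

Definition rank n (a : bits n) := val2 a.

Lemma bleE n (a b : bits n) : ble a b = (rank a <= rank b).
Proof. by rewrite /ble lexle_val2 // !size_tuple. Qed.

Lemma rank_inj n : injective (@rank n).
Proof. by move=> a b /val2_inj H; apply: val_inj; apply: H; rewrite !size_tuple. Qed.

Lemma rank_lt n (a : bits n) : rank a < 2 ^ n.
Proof. by have := val2_lt a; rewrite size_tuple. Qed.

Definition thr n (q : query n) := match q with QTheta x => rank x | QZero => 2 ^ n end.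

Lemma qevalE n (q : query n) y : qeval q y = (thr q <= rank y).
Proof.
case: q => [x|] /=; first by rewrite bleE.
by apply/esym/negbTE; rewrite -ltnNge rank_lt.
Qed.

Lemma ex_min (Q : nat -> Prop) : (exists m, Q m) -> exists m, Q m /\ forall m', Q m' -> m <= m'.
Proof.
move=> [m Hm].
suff: forall N m, m <= N -> Q m -> exists m, Q m /\ forall m', Q m' -> m <= m'.
  by move=> H; apply: (H m m).
elim=> [|N IH] m0 Hle Q0.
  exists m0; split=> // m' _; lia.
case: (classic (exists m', m' < m0 /\ Q m')) => [[m' [Hlt Qm']]|H].
  apply: (IH m') => //; lia.
exists m0; split=> // m' Qm'; rewrite leqNgt; apply/negP => Hlt; apply: H; by exists m'.
Qed.

Fixpoint idx n (t : protocol n) (a b : bits n) : nat :=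
  match t with
  | PLeaf _ => 0
  | PNode p q t0 t1 =>
      let x := match p with Alice => a | Bob => b end in
      if qeval q x then 2 * idx t1 a b + 1 else 2 * idx t0 a b
  end.

Lemma idx_lt n (t : protocol n) a b : idx t a b < 2 ^ depth t.
Proof.
elim: t => [o|p q t0 IH0 t1 IH1] //=.
have H0 : 2 ^ depth t0 <= 2 ^ maxn (depth t0) (depth t1) by rewrite leq_exp2l // leq_maxl.
have H1 : 2 ^ depth t1 <= 2 ^ maxn (depth t0) (depth t1) by rewrite leq_exp2l // leq_maxr.
move: IH0 IH1.
rewrite expnS; case: (qeval _ _) => /=; lia.
Qed.

Lemma if_idx (c c' : bool) x y x' y' :
  (if c then 2 * x + 1 else 2 * y) = (if c' then 2 * x' + 1 else 2 * y') ->
  c = c' /\ (if c then x = x' else y = y').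
Proof. case: c; case: c' => /= H; try (exfalso; lia); split=> //; lia. Qed.

Lemma idx_run n (t : protocol n) a b a' b' :
  idx t a b = idx t a' b' -> run t a b = run t a' b'.
Proof.
elim: t => [o|p q t0 IH0 t1 IH1] //=.
move=> /if_idx [-> H]; move: H.
by case: (qeval _ _) => H; [apply: IH1|apply: IH0].
Qed.

Lemma idx_conv n (t : protocol n) a1 b1 a2 b2 a3 b3 a4 b4 a b :
  idx t a2 b2 = idx t a1 b1 -> idx t a3 b3 = idx t a1 b1 -> idx t a4 b4 = idx t a1 b1 ->
  rank a1 <= rank a <= rank a2 -> rank b3 <= rank b <= rank b4 ->
  idx t a b = idx t a1 b1.
Proof.
elim: t => [o|p q t0 IH0 t1 IH1] //=.
move=> /if_idx [E2 H2] /if_idx [E3 H3] /if_idx [E4 H4] Ha Hb.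
have Ec : qeval q (match p with Alice => a | Bob => b end) =
          qeval q (match p with Alice => a1 | Bob => b1 end).
  clear H2 H3 H4 IH0 IH1; move: E2 E3 E4; case: p => /=; rewrite !qevalE;
  do 5 (case: leqP => //); lia.
rewrite E2 in H2; rewrite E3 in H3; rewrite E4 in H4; rewrite Ec; move: H2 H3 H4.
case: (qeval _ _) => H2 H3 H4; [rewrite (IH1 H2 H3 H4) | rewrite (IH0 H2 H3 H4)] => //.
Qed.

Lemma fiber_gmp n (T : eqType) (g : bits n * bits n -> T) (f : bits n -> bits n -> bool)
  (conv : forall p1 p2 p3 p4 a b, g p2 = g p1 -> g p3 = g p1 -> g p4 = g p1 ->
     rank p1.1 <= rank a <= rank p2.1 -> rank p3.2 <= rank b <= rank p4.2 ->
     g (a, b) = g p1)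
  (mono : forall p p', g p = g p' -> f p.1 p.2 = f p'.1 p'.2) :
  geom_mono_partition f (preim_partition g [set: bits n * bits n]).
Proof.
split; first exact: preim_partitionP.
move=> B /imsetP [x0 _ ->].
have Px0 : g x0 == g x0 by [].
case: (@arg_minnP _ x0 (fun p => g x0 == g p) (fun p => rank p.1) Px0) => p1 /eqP E1 m1.
case: (@arg_maxnP _ x0 (fun p => g x0 == g p) (fun p => rank p.1) Px0) => p2 /eqP E2 m2.
case: (@arg_minnP _ x0 (fun p => g x0 == g p) (fun p => rank p.2) Px0) => p3 /eqP E3 m3.
case: (@arg_maxnP _ x0 (fun p => g x0 == g p) (fun p => rank p.2) Px0) => p4 /eqP E4 m4.
split.
  exists p1.1, p2.1, p3.2, p4.2; apply/setP => -[a b]; rewrite !inE !bleE /=.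
  apply/eqP/idP.
    move=> E; have Eb : g x0 == g (a, b) by apply/eqP.
    by have := m1 _ Eb; have := m2 _ Eb; have := m3 _ Eb; have := m4 _ Eb => /= -> -> -> ->.
  move=> /and4P [h1 h2 h3 h4].
  rewrite E1; apply/esym/(conv p1 p2 p3 p4); rewrite -?E1 -?E2 -?E3 -?E4 //.
    by rewrite h1 h2.
  by rewrite h3 h4.
exists (f x0.1 x0.2) => p; rewrite !inE => /eqP E.
by apply: mono.
Qed.

Lemma card_fiber n (g : bits n * bits n -> nat) N (H : forall p, g p < N) :
  #|preim_partition g [set: bits n * bits n]| <= N.
Proof.
pose F (i : 'I_N) := [set y in [set: bits n * bits n] | i == g y :> nat].
apply: (@leq_trans #|[set F i | i : 'I_N]|); last by rewrite (leq_trans (leq_imset_card _ _)) // card_ord.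
apply: subset_leq_card; apply/subsetP => B /imsetP [x0 _ ->].
apply/imsetP; exists (Ordinal (H x0)) => //.
Qed.

Lemma lower n (f : bits n -> bits n -> bool) (t : protocol n) :
  computes t f -> exists P, geom_mono_partition f P /\ #|P| <= 2 ^ depth t.
Proof.
move=> Ht; exists (preim_partition (fun p => idx t p.1 p.2) [set: bits n * bits n]).
split; last by apply: card_fiber => p; apply: idx_lt.
apply: fiber_gmp.
  move=> p1 p2 p3 p4 a b /= E2 E3 E4 Ha Hb.
  exact: (idx_conv E2 E3 E4 Ha Hb).
by move=> p p' /= /idx_run; rewrite !Ht.
Qed.

Lemma singleton_gmp n (f : bits n -> bits n -> bool) :
  exists P, geom_mono_partition f P.
Proof.
exists (preim_partition id [set: bits n * bits n]).
apply: fiber_gmp; last by move=> p p' ->.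
move=> p1 p2 p3 p4 a b /= E2 E3 E4; rewrite E2 E3 E4 => Ha Hb.
have -> : a = p1.1 by apply: rank_inj; lia.
have -> : b = p1.2 by apply: rank_inj; lia.
by case: p1 {E2 E3 E4 Ha Hb}.
Qed.

Lemma ble_trans n : transitive (@ble n).
Proof. move=> b a c; rewrite !bleE; lia. Qed.
Lemma ble_refl n : reflexive (@ble n).
Proof. by move=> a; rewrite bleE. Qed.
Lemma ble_total n : total (@ble n).
Proof. move=> a b; rewrite !bleE; lia. Qed.

Definition ix n (xs : seq (bits n)) (a : bits n) := find (fun x => ~~ ble x a) xs.

Definition qof n (x0 : bits n) (xs : seq (bits n)) m : query n :=
  if (0 < m) && (m <= size xs) then QTheta (nth x0 xs m.-1) else QZero n.

Definition sel n (pl : player) (a b : bits n) := match pl with Alice => a | Bob => b end.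

Fixpoint search n (pl : player) (x0 : bits n) (xs : seq (bits n)) (e lo : nat)
  (cont : nat -> protocol n) : protocol n :=
  match e with
  | 0 => cont lo
  | e'.+1 => let mid := lo + 2 ^ e' in
     PNode pl (qof x0 xs mid) (search pl x0 xs e' lo cont) (search pl x0 xs e' mid cont)
  end.

Lemma sorted_ble n (x0 : bits n) xs i j : sorted (@ble n) xs -> i <= j -> j < size xs ->
  ble (nth x0 xs i) (nth x0 xs j).
Proof.
move=> Hs Hij Hj; apply: (sorted_leq_nth (@ble_trans n) (@ble_refl n) x0 Hs) => //;
rewrite inE; lia.
Qed.

Lemma qof_correct n (x0 : bits n) xs m a : sorted (@ble n) xs -> 0 < m ->
  qeval (qof x0 xs m) a = (m <= ix xs a).
Proof.
rewrite /qof => Hs Hm; rewrite Hm /=.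
case: ifP => Hsz /=.
  apply/idP/idP.
    move=> Hle; rewrite leqNgt; apply/negP => Hlt.
    have Hhas : has (fun x => ~~ ble x a) xs by rewrite has_find; rewrite /ix in Hlt; lia.
    have := nth_find x0 Hhas => /negP; apply.
    apply: ble_trans Hle; apply: sorted_ble => //; rewrite /ix in Hlt; lia.
  move=> Hle; have := @before_find _ x0 (fun x => ~~ ble x a) xs m.-1.
  by rewrite /ix in Hle => /(_ ltac:(lia)) /= /negbFE.
apply/esym/negbTE; rewrite -ltnNge; have := find_size (fun x => ~~ ble x a) xs.
rewrite /ix; lia.
Qed.

Lemma search_run n pl (x0 : bits n) xs e lo cont a b : sorted (@ble n) xs ->
  lo <= ix xs (sel pl a b) < lo + 2 ^ e ->
  run (search pl x0 xs e lo cont) a b = run (cont (ix xs (sel pl a b))) a b.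
Proof.
move=> Hs; elim: e lo => [|e IH] lo /= Hr.
  by have -> : ix xs (sel pl a b) = lo by lia.
rewrite -/(sel pl a b) qof_correct //; last by have := expn_gt0 2 e; lia.
case: ifP => H; apply: IH; rewrite expnS in Hr; lia.
Qed.

Lemma search_depth n pl (x0 : bits n) xs e lo cont d :
  (forall i, depth (cont i) <= d) -> depth (search pl x0 xs e lo cont) <= e + d.
Proof.
move=> Hc; elim: e lo => [|e IH] lo //=.
by rewrite addSn ltnS geq_max !IH.
Qed.

Lemma ix_contra n (xs : seq (bits n)) a p : sorted (@ble n) xs -> p \in xs -> ble p a ->
  ix xs a <= index p xs -> False.
Proof.
move=> Hs Pin Hpa Hle.
have Hj : index p xs < size xs by rewrite index_mem.
have Hhas : has (fun x => ~~ ble x a) xs by rewrite has_find; rewrite /ix in Hle; lia.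
have := nth_find p Hhas => /negP; apply.
apply: ble_trans Hpa; rewrite -{2}(nth_index p Pin); apply: sorted_ble => //.
Qed.

Lemma ix_pos n (xs : seq (bits n)) a : sorted (@ble n) xs ->
  (exists2 p, p \in xs & ble p a) -> 0 < ix xs a.
Proof.
move=> Hs [p Pin Hpa]; rewrite lt0n; apply/negP => /eqP E.
by apply: (ix_contra Hs Pin Hpa); rewrite E.
Qed.

Lemma ix_const n (xs : seq (bits n)) (h : bits n -> bool) :
  sorted (@ble n) xs ->
  (forall a', exists2 p, p \in xs & ble p a' /\ forall a, ble p a -> ble a a' -> h a = h a') ->
  forall a a', ix xs a = ix xs a' -> h a = h a'.
Proof.
move=> Hs Hyp.
suff W : forall a a', ble a a' -> ix xs a = ix xs a' -> h a = h a'.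
  move=> a a' E; case/orP: (ble_total a a') => H; first exact: W.
  by symmetry; apply: W.
move=> a a' Haa E; case: (Hyp a') => p Pin [Hpa' Hp]; apply: Hp => //.
case Hpa: (ble p a) => //; exfalso.
case: (ltnP (index p xs) (ix xs a)) => Hji.
  have := @before_find _ p (fun x => ~~ ble x a) xs _ Hji.
  by rewrite nth_index // Hpa.
by apply: (ix_contra Hs Pin Hpa'); rewrite -E.
Qed.

Definition rep n (R : {set bits n * bits n}) :=
  [pick t : (bits n * bits n * bits n * bits n) | R == geom_rect t.1.1.1 t.1.1.2 t.1.2 t.2].
Definition lA n (x0 : bits n) R := if rep R is Some t then t.1.1.1 else x0.
Definition lB n (x0 : bits n) R := if rep R is Some t then t.1.2 else x0.

Lemma rep_spec n (x0 : bits n) R : is_geom_rect R ->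
  exists q s, R = geom_rect (lA x0 R) q (lB x0 R) s.
Proof.
move=> [a1 [a2 [b1 [b2 E]]]]; rewrite /lA /lB /rep; case: pickP => [t /eqP Et | Hn].
  by exists t.1.1.2, t.2.
by have := Hn (a1, a2, b1, b2); rewrite /= E eqxx.
Qed.

Lemma upper n (f : bits n -> bits n -> bool) P : geom_mono_partition f P ->
  exists t, computes t f /\ depth t <= 2 * up_log 2 #|P|.
Proof.
move=> [/and3P [/eqP Hcov _ _] Hgeom].
pose x0 := nseq_tuple n false.
have Hin : forall a b, exists2 R, R \in P & (a, b) \in R.
  move=> a b; have : (a, b) \in cover P by rewrite Hcov inE.
  by move=> /bigcupP [R HR Hab]; exists R.
pose xsA := sort (@ble n) (enum [set lA x0 R | R in P]).
pose xsB := sort (@ble n) (enum [set lB x0 R | R in P]).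
have sA : sorted (@ble n) xsA by apply: sort_sorted; exact: ble_total.
have sB : sorted (@ble n) xsB by apply: sort_sorted; exact: ble_total.
have zA : size xsA <= #|P| by rewrite size_sort -cardE leq_imset_card.
have zB : size xsB <= #|P| by rewrite size_sort -cardE leq_imset_card.
have key : forall a' b', exists R, [/\ lA x0 R \in xsA, lB x0 R \in xsB,
     ble (lA x0 R) a', ble (lB x0 R) b' &
     forall a b, ble (lA x0 R) a -> ble a a' -> ble (lB x0 R) b -> ble b b' ->
       f a b = f a' b'].
  move=> a' b'; case: (Hin a' b') => R HR Hab.
  case: (Hgeom R HR) => Hg [c Hc].
  case: (rep_spec x0 Hg) => q [s ER].
  move: (Hab); rewrite {1}ER inE /= => /and4P [h1 h2 h3 h4].
  exists R; split => //.
  - by rewrite mem_sort mem_enum; apply: imset_f.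
  - by rewrite mem_sort mem_enum; apply: imset_f.
  move=> a b ha ha' hb hb'.
  rewrite (Hc (a', b') Hab) (Hc (a, b)) // ER inE /= ha hb (ble_trans ha' h2) (ble_trans hb' h4).
  done.
have HypA : forall b, forall a', exists2 p, p \in xsA & ble p a' /\
    forall a, ble p a -> ble a a' -> f a b = f a' b.
  move=> b a'; case: (key a' b) => R [HA _ h1 h2 Hf].
  by exists (lA x0 R) => //; split => // a ha ha'; apply: Hf => //; apply: ble_refl.
have HypB : forall a, forall b', exists2 p, p \in xsB & ble p b' /\
    forall b, ble p b -> ble b b' -> f a b = f a b'.
  move=> a b'; case: (key a b') => R [_ HB h1 h2 Hf].
  by exists (lB x0 R) => //; split => // b hb hb'; apply: Hf => //; apply: ble_refl.
pose e := up_log 2 #|P|.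
have He : #|P| <= 2 ^ e by apply: up_logP.
pose repA i := odflt x0 [pick a | ix xsA a == i].
pose repB i := odflt x0 [pick b | ix xsB b == i].
exists (search Alice x0 xsA e 1 (fun i =>
          search Bob x0 xsB e 1 (fun j => PLeaf n (f (repA i) (repB j))))).
split.
  move=> a b.
  have pa : 0 < ix xsA a.
    by apply: ix_pos => //; case: (HypA b a) => p Hp [Hpa _]; exists p.
  have pb : 0 < ix xsB b.
    by apply: ix_pos => //; case: (HypB a b) => p Hp [Hpb _]; exists p.
  have la : ix xsA a <= size xsA by apply: find_size.
  have lb : ix xsB b <= size xsB by apply: find_size.
  rewrite search_run //=; last by lia.
  rewrite search_run //=; last by lia.
  rewrite /repA /repB; case: pickP => [a1 /eqP Ea1 | Hn]; last by have := Hn a; rewrite eqxx.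
  case: pickP => [b1 /eqP Eb1 | Hn]; last by have := Hn b; rewrite eqxx.
  rewrite /=.
  rewrite (@ix_const n xsB (f a1) sB (HypB a1) _ _ Eb1).
  exact: (@ix_const n xsA (f^~ b) sA (HypA b) _ _ Ea1).
apply: leq_trans (search_depth _ _ _ _ _ (d := e + 0) _) _.
  by move=> i; apply: search_depth.
lia.
Qed.

Lemma log_bound (k c : nat) : 0 < k -> k <= 2 ^ c -> Rle (log2R (INR k)) (INR c).
Proof.
move=> kpos kle.
have L0 : Rlt 0 (ln 2) by rewrite -ln_1; apply: ln_increasing; lra.
have E2 : INR 2 = IZR 2 by simpl; ring.
have Hk : Rlt 0 (INR k) by apply: lt_0_INR; apply/ltP.
have Ep : forall c, INR (2 ^ c) = pow (IZR 2) c.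
  elim=> [|m IH]; first by rewrite expn0.
  by rewrite expnS -multE mult_INR IH E2.
have Hle : Rle (INR k) (pow (IZR 2) c) by rewrite -Ep; apply: le_INR; apply/leP.
have Hln : Rle (ln (INR k)) (Rmult (INR c) (ln 2)).
  rewrite -ln_pow; last by lra.
  case: (Rle_lt_or_eq_dec _ _ Hle) => [H|->]; last by apply: Rle_refl.
  by apply: Rlt_le; apply: ln_increasing.
rewrite /log2R; apply: (Rmult_le_reg_r (ln 2)) => //.
have -> : Rmult (Rdiv (ln (INR k)) (ln 2)) (ln 2) = ln (INR k) by field; lra.
by [].
Qed.

Theorem mainTheorem8 (n : nat) (hn : 1 <= n) (f : bits n -> bits n -> bool) :
  exists k c : nat,
    is_chi_geom f k /\ is_C_comp f c /\
    Rle (log2R (INR k)) (INR c) /\ c <= 2 * up_log 2 k.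
Proof.
case: (singleton_gmp f) => P0 H0.
case: (@ex_min (fun k => exists P, geom_mono_partition f P /\ #|P| = k)).
  by exists #|P0|, P0.
move=> k [[P [HP HPk]] kmin].
case: (upper HP) => T [HT HTd].
case: (@ex_min (fun c => exists t, computes t f /\ depth t = c)).
  by exists (depth T), T.
move=> c [[t [Ht Htc]] cmin].
exists k, c; split.
  by split; [exists P | move=> P' HP'; apply: kmin; exists P'].
split.
  by split; [exists t | move=> t' Ht'; apply: cmin; exists t'].
have cT : c <= depth T by apply: cmin; exists T.
split; last by rewrite -HPk; lia.
case: (lower Ht) => P' [HP' HP'c].
have kle : k <= 2 ^ c by rewrite -Htc; apply: leq_trans HP'c; apply: kmin; exists P'.
apply: log_bound => //.
rewrite -HPk; case: HP => /and3P [/eqP Hcov _ _] _.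
pose x0 := nseq_tuple n false.
have : (x0, x0) \in cover P by rewrite Hcov inE.
move=> /bigcupP [R HR _]; apply/card_gt0P; by exists R.
Qed.
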